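(* Let $t$ be a $\lambda\mu$-term and $y$ a $\lambda$-variable. If $(t\;y)$ is normalizable, then $t$ is normalizable.
   Context: $\lambda\mu$-terms: $t::= x\mid \lambda x.t\mid (t\;t)\mid \mu a.t\mid (a\;t)$ over disjoint infinite sets of $\lambda$-variables and $\mu$-variables. Reduction $(\lambda x.u\;v)\triangleright u[x:=v]$, $(\mu a.u\;v)\triangleright\mu a.u[a:=^*v]$ ($u[a:=^*v]$ replaces each subterm $(a\;w)$ of $u$ by $(a\;(w\;v))$); a term is normalizable if it reduces (by the compatible closure of these rules) to a normal form. *)

(* Defs.v *)
(* lambda-mu-terms in de Bruijn notation, with two separate
   index spaces: lambda-variables (bound by Lam) and mu-variables (bound by Mu). *)
From Stdlib Require Import Arith Relations.

Inductive term : Type :=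
| Var : nat -> term
| Lam : term -> term
| App : term -> term -> term
| Mu : term -> term
| Named : nat -> term -> term.   (* (a t), a a mu-variable *)

Fixpoint lift_l (k : nat) (t : term) : term :=
  match t with
  | Var n => if n <? k then Var n else Var (S n)
  | Lam u => Lam (lift_l (S k) u)
  | App u v => App (lift_l k u) (lift_l k v)
  | Mu u => Mu (lift_l k u)
  | Named a u => Named a (lift_l k u)
  end.

Fixpoint lift_m (k : nat) (t : term) : term :=
  match t with
  | Var n => Var n
  | Lam u => Lam (lift_m k u)
  | App u v => App (lift_m k u) (lift_m k v)
  | Mu u => Mu (lift_m (S k) u)
  | Named a u => Named (if a <? k then a else S a) (lift_m k u)
  end.

(* t[k := v] for lambda-variable k; the binder for k is removed, so free
   lambda-variables above k are decremented. v is kept correctly lifted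
   when going under binders. *)
Fixpoint subst_l (k : nat) (v : term) (t : term) : term :=
  match t with
  | Var n => if n <? k then Var n else if n =? k then v else Var (pred n)
  | Lam u => Lam (subst_l (S k) (lift_l 0 v) u)
  | App u w => App (subst_l k v u) (subst_l k v w)
  | Mu u => Mu (subst_l k (lift_m 0 v) u)
  | Named a u => Named a (subst_l k v u)
  end.

(* structural substitution t[a :=* v]: every subterm (a w) becomes (a (w v)) *)
Fixpoint subst_m (a : nat) (v : term) (t : term) : term :=
  match t with
  | Var n => Var n
  | Lam u => Lam (subst_m a (lift_l 0 v) u)
  | App u w => App (subst_m a v u) (subst_m a v w)
  | Mu u => Mu (subst_m (S a) (lift_m 0 v) u)
  | Named b u =>
      if b =? a then Named b (App (subst_m a v u) v)
      else Named b (subst_m a v u)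
  end.

Inductive step : term -> term -> Prop :=
| step_beta : forall u v, step (App (Lam u) v) (subst_l 0 v u)
| step_mu : forall u v, step (App (Mu u) v) (Mu (subst_m 0 (lift_m 0 v) u))
| step_lam : forall u u', step u u' -> step (Lam u) (Lam u')
| step_appl : forall u u' v, step u u' -> step (App u v) (App u' v)
| step_appr : forall u v v', step v v' -> step (App u v) (App u v')
| step_mu_c : forall u u', step u u' -> step (Mu u) (Mu u')
| step_named : forall a u u', step u u' -> step (Named a u) (Named a u').

Definition reduces : term -> term -> Prop := clos_refl_trans term step.

Definition normal (t : term) : Prop := forall t', ~ step t t'.

Definition normalizable (t : term) : Prop :=
  exists n, reduces t n /\ normal n.

(* Main.v *)
Require Import Defs.
From Stdlib Require Import Arith Relations Lia.

Arguments Nat.eqb : simpl never. Arguments Nat.ltb : simpl never. Arguments Nat.leb : simpl never.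
Ltac ncase :=
  repeat (simpl in *; match goal with
  | |- context [?a <? ?b] => destruct (Nat.ltb_spec a b)
  | |- context [?a =? ?b] => destruct (Nat.eqb_spec a b)
  end); simpl in *; try subst; try reflexivity; try (f_equal; lia); try lia.

Lemma L1 : forall u i j, i <= j -> lift_l i (lift_l j u) = lift_l (S j) (lift_l i u).
Proof. induction u; intros i j H; simpl; try (f_equal; auto; apply IHu; lia); ncase.
Qed.
Lemma L2 : forall u i j, lift_l i (lift_m j u) = lift_m j (lift_l i u).
Proof. induction u; intros; simpl; f_equal; auto; ncase. Qed.
Lemma L3 : forall u i j, i <= j -> lift_m i (lift_m j u) = lift_m (S j) (lift_m i u).
Proof. induction u; intros i j H; simpl; try (f_equal; auto; apply IHu; lia).
 all: f_equal; auto; ncase. Qed.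
Lemma L4 : forall u k v, subst_l k v (lift_l k u) = u.
Proof. induction u; intros; simpl; try (f_equal; auto; fail). ncase. Qed.
Lemma L5 : forall u i k v, i <= k -> lift_l i (subst_l k v u) = subst_l (S k) (lift_l i v) (lift_l i u).
Proof. induction u; intros i k v H; simpl.
  - ncase.
  - f_equal. rewrite IHu by lia. rewrite (L1 v 0 i) by lia. auto.
  - f_equal; auto.
  - f_equal. rewrite IHu by lia. rewrite L2; auto.
  - f_equal; auto.
Qed.
Lemma L6 : forall u i k v, k <= i -> lift_l i (subst_l k v u) = subst_l k (lift_l i v) (lift_l (S i) u).
Proof. induction u; intros i k v H; simpl.
  - ncase. 
  - f_equal. rewrite IHu by lia. rewrite (L1 v 0 i) by lia. auto.
  - f_equal; auto.
  - f_equal. rewrite IHu by lia. rewrite L2; auto.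
  - f_equal; auto.
Qed.
Definition mvar k b := if b <? k then b else S b.
Definition lvar k y := if y <? k then y else S y.

Lemma L7 : forall u k a V, lift_l k (subst_m a V u) = subst_m a (lift_l k V) (lift_l k u).
Proof. induction u; intros; simpl.
  - ncase.
  - f_equal. rewrite IHu. rewrite (L1 V 0 k) by lia. auto.
  - f_equal; auto.
  - f_equal. rewrite IHu. rewrite L2; auto.
  - destruct (n =? a); simpl; rewrite IHu; auto.
Qed.
Lemma L8 : forall u k j v, lift_m k (subst_l j v u) = subst_l j (lift_m k v) (lift_m k u).
Proof. induction u; intros; simpl.
  - ncase.
  - f_equal. rewrite IHu. rewrite L2; auto.
  - f_equal; auto.
  - f_equal. rewrite IHu. rewrite (L3 v 0 k) by lia. auto.
  - f_equal; auto.
Qed.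
Lemma mvar_inj : forall k a b, (mvar k a =? mvar k b) = (a =? b).
Proof. intros; unfold mvar. ncase; destruct (Nat.eqb_spec a b); try lia; auto. Qed.
Lemma L9 : forall u k a V, lift_m k (subst_m a V u) = subst_m (mvar k a) (lift_m k V) (lift_m k u).
Proof. induction u; intros; simpl.
  - auto.
  - f_equal. rewrite IHu. rewrite L2; auto.
  - f_equal; auto.
  - f_equal. rewrite IHu. rewrite (L3 V 0 k) by lia. f_equal. unfold mvar; ncase.
  - fold (mvar k n). rewrite mvar_inj. destruct (n =? a); simpl; rewrite IHu; auto.
Qed.
Lemma L10 : forall u j k v W, j <= k ->
  subst_l k W (subst_l j v u) = subst_l j (subst_l k W v) (subst_l (S k) (lift_l j W) u).
Proof. induction u; intros j k v W H; simpl.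
  - ncase. rewrite L4. auto.
  - f_equal. rewrite IHu by lia. rewrite (L5 v 0 k) by lia. rewrite (L1 W 0 j) by lia. auto.
  - f_equal; auto.
  - f_equal. rewrite IHu by lia. rewrite L8, L2. auto.
  - f_equal; auto.
Qed.
Lemma L14 : forall X c Y, subst_m c Y (lift_m c X) = lift_m c X.
Proof. induction X; intros; simpl; try (f_equal; auto; fail).
  fold (mvar c n). replace (mvar c n =? c) with false. f_equal; auto.
  unfold mvar; ncase; symmetry; apply Nat.eqb_neq; lia.
Qed.
Lemma L11 : forall u k a W X, subst_l k (lift_m a W) (subst_m a X u) = subst_m a (subst_l k (lift_m a W) X) (subst_l k (lift_m a W) u).
Proof. induction u; intros; simpl.
  - ncase. rewrite L14. auto.
  - f_equal. rewrite L2, IHu, <- L2. rewrite (L5 X 0 k) by lia. auto.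
  - f_equal; auto.
  - f_equal. rewrite (L3 W 0 a) by lia. rewrite IHu. rewrite L8. rewrite (L3 W 0 a) by lia. auto.
  - destruct (n =? a); simpl; rewrite IHu; auto.
Qed.
Lemma L12 : forall u k b V v, subst_m b V (subst_l k v u) = subst_l k (subst_m b V v) (subst_m b (lift_l k V) u).
Proof. induction u; intros; simpl.
  - ncase.
  - f_equal. rewrite IHu. rewrite L7. rewrite (L1 V 0 k) by lia. auto.
  - f_equal; auto.
  - f_equal. rewrite IHu. rewrite (L9 v 0 b). rewrite L2. auto.
  - destruct (n =? b); simpl; rewrite IHu; auto. rewrite L4. auto.
Qed.
Lemma L13 : forall u a c X Y, c <= a ->
  subst_m (S a) (lift_m c X) (subst_m c Y u) = subst_m c (subst_m (S a) (lift_m c X) Y) (subst_m (S a) (lift_m c X) u).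
Proof. induction u; intros a c X Y H; simpl.
  - auto.
  - f_equal. rewrite L2. rewrite IHu by lia. rewrite L7, L2. auto.
  - f_equal; auto.
  - f_equal. rewrite (L3 X 0 c) by lia. rewrite IHu by lia.
    rewrite (L9 Y 0 (S a)). rewrite (L3 X 0 c) by lia. auto.
  - repeat (match goal with |- context [?x =? ?y] => destruct (Nat.eqb_spec x y) end; simpl); try lia; subst;
    rewrite ?IHu by lia; rewrite ?L14; auto.
Qed.

Lemma mvar_S0 : forall k, mvar (S k) 0 = 0.
Proof. reflexivity. Qed.
Lemma mvar_0 : forall b, mvar 0 b = S b.
Proof. reflexivity. Qed.

Lemma S1 : forall u u', step u u' -> forall k, step (lift_l k u) (lift_l k u').
Proof. induction 1; intros; simpl; try (constructor; auto; fail).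
  - rewrite (L6 u k 0 v) by lia. constructor.
  - rewrite L7, L2. constructor.
Qed.
Lemma S2 : forall u u', step u u' -> forall k, step (lift_m k u) (lift_m k u').
Proof. induction 1; intros; simpl; try (constructor; auto; fail).
  - rewrite L8. constructor.
  - rewrite L9, mvar_S0. rewrite <- (L3 v 0 k) by lia. constructor.
Qed.
Lemma S3 : forall u u', step u u' -> forall k W, step (subst_l k W u) (subst_l k W u').
Proof. induction 1; intros; simpl; try (constructor; auto; fail).
  - rewrite (L10 u 0 k) by lia. constructor.
  - rewrite (L11 u k 0 W). rewrite <- L8. constructor.
Qed.
Lemma S4 : forall u u', step u u' -> forall b V, step (subst_m b V u) (subst_m b V u').
Proof. induction 1; intros; simpl; try (constructor; auto; fail).
  - rewrite (L12 u 0 b). constructor.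
  - rewrite (L13 u b 0 V (lift_m 0 v)) by lia. replace (subst_m (S b) (lift_m 0 V) (lift_m 0 v)) with (lift_m 0 (subst_m b V v)) by (rewrite L9; reflexivity). constructor.
  - destruct (a =? b); repeat constructor; auto.
Qed.

Lemma rt_map : forall (f : term -> term), (forall u u', step u u' -> step (f u) (f u')) ->
  forall u u', reduces u u' -> reduces (f u) (f u').
Proof. intros f Hf u u' H; induction H; [apply rt_step; auto | apply rt_refl | eapply rt_trans; eauto]. Qed.

Lemma lL0var : forall j, lift_l 0 (Var j) = Var (S j).
Proof. reflexivity. Qed.
Lemma L11v : forall u k a j X, subst_l k (Var j) (subst_m a X u) = subst_m a (subst_l k (Var j) X) (subst_l k (Var j) u).
Proof. intros. exact (L11 u k a (Var j) X). Qed.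

Ltac kill_ifs := repeat match goal with H: context [if ?c then _ else _] |- _ => destruct c end.

Lemma R1 : forall u k j s', step (subst_l k (Var j) u) s' -> exists u', step u u' /\ s' = subst_l k (Var j) u'.
Proof. induction u; intros k j s' H; simpl in H.
  - kill_ifs; inversion H.
  - change (if j <? 0 then Var j else Var (S j)) with (Var (S j)) in H. inversion H; subst. destruct (IHu _ _ _ H1) as [u0 [? ?]].
    exists (Lam u0); split; [constructor; auto | simpl; subst; reflexivity].
  - inversion H; subst.
    + destruct u1; simpl in *; kill_ifs; try discriminate. injection H1 as E; subst.
      exists (subst_l 0 u2 u1); split; [constructor|]. rewrite (L10 u1 0 k u2 (Var j)) by lia. reflexivity.
    + destruct u1; simpl in *; kill_ifs; try discriminate. injection H1 as E; subst.
      exists (Mu (subst_m 0 (lift_m 0 u2) u1)); split; [constructor|]. simpl.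
      rewrite L11v. rewrite L8. reflexivity.
    + destruct (IHu1 _ _ _ H3) as [u0 [? ?]]. exists (App u0 u2); split; [constructor; auto| simpl; subst; auto].
    + destruct (IHu2 _ _ _ H3) as [u0 [? ?]]. exists (App u1 u0); split; [constructor; auto| simpl; subst; auto].
  - inversion H; subst. destruct (IHu _ _ _ H1) as [u0 [? ?]].
    exists (Mu u0); split; [constructor; auto | simpl; subst; auto].
  - inversion H; subst. destruct (IHu _ _ _ H3) as [u0 [? ?]].
    exists (Named n u0); split; [constructor; auto | simpl; subst; auto].
Qed.

Lemma R2 : forall X n, reduces X n -> forall k j u, X = subst_l k (Var j) u ->
  exists u', reduces u u' /\ n = subst_l k (Var j) u'.
Proof. intros X n H. apply clos_rt_rt1n in H. induction H; intros k j u E.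
  - exists u; split; [apply rt_refl | auto].
  - subst. destruct (R1 _ _ _ _ H) as [u1 [? ?]]. destruct (IHclos_refl_trans_1n k j u1 H2) as [u2 [? ?]].
    exists u2; split; auto. eapply rt_trans; [apply rt_step; eauto | auto].
Qed.

Lemma Cren : forall u k j n, reduces (subst_l k (Var j) u) n -> normal n -> normalizable u.
Proof. intros. destruct (R2 _ _ H k j u eq_refl) as [u' [? ?]]. exists u'; split; auto.
  intros u'' Hs. subst. apply (H0 _ (S3 _ _ Hs k (Var j))). Qed.

Definition liftS (s : nat -> option nat) : nat -> option nat := fun b => option_map S (s b).
Definition shiftS (s : nat -> option nat) : nat -> option nat :=
  fun b => match b with 0 => None | S b' => s b' end.

Inductive Q : (nat -> option nat) -> term -> term -> Prop :=
| Qvar sg n : Q sg (Var n) (Var n)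
| Qlam sg u s : Q (liftS sg) u s -> Q sg (Lam u) (Lam s)
| Qapp sg u1 s1 u2 s2 : Q sg u1 s1 -> Q sg u2 s2 -> Q sg (App u1 u2) (App s1 s2)
| Qmu sg u s : Q (shiftS sg) u s -> Q sg (Mu u) (Mu s)
| Qnamed sg b u s : sg b = None -> Q sg u s -> Q sg (Named b u) (Named b s)
| Qact sg b y w w' r : sg b = Some y -> Q sg w w' -> reduces (App w' (Var y)) r ->
    Q sg (Named b w) (Named b r).

Lemma lL_var : forall k y, lift_l k (Var y) = Var (lvar k y).
Proof. intros; unfold lvar; simpl; destruct (y <? k); auto. Qed.

Lemma QlL : forall sg u s, Q sg u s -> forall k sg', (forall b, sg' b = option_map (lvar k) (sg b)) ->
  Q sg' (lift_l k u) (lift_l k s).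
Proof. induction 1; intros k sg' Hs; simpl.
  - destruct (n <? k); constructor.
  - constructor. apply IHQ. intros b; unfold liftS; rewrite Hs; destruct (sg b); simpl; auto.
    f_equal. unfold lvar; ncase.
  - constructor; auto.
  - constructor. apply IHQ. intros [|b]; simpl; auto.
  - constructor; auto. rewrite Hs, H; auto.
  - apply Qact with (y := lvar k y) (w' := lift_l k w'); auto. rewrite Hs, H; auto.
    rewrite <- lL_var. apply (rt_map (lift_l k) (fun a b h => S1 a b h k) _ _ H1).
Qed.

Lemma QlM : forall sg u s, Q sg u s -> forall k sg', (forall b, sg' (mvar k b) = sg b) ->
  Q sg' (lift_m k u) (lift_m k s).
Proof. induction 1; intros k sg' Hs; simpl.
  - constructor.
  - constructor. apply IHQ. intros b; unfold liftS; rewrite Hs; auto.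
  - constructor; auto.
  - constructor. apply IHQ. intros [|b]; [reflexivity|].
    replace (mvar (S k) (S b)) with (S (mvar k b)) by (unfold mvar; ncase). simpl. auto.
  - constructor; auto. fold (mvar k b). rewrite Hs; auto.
  - fold (mvar k b). apply Qact with (y := y) (w' := lift_m k w'); auto. rewrite Hs, H; auto.
    apply (rt_map (lift_m k) (fun a b h => S2 a b h k) _ _ H1).
Qed.

Lemma QsL : forall sg u s, Q sg u s -> forall k tau U S, Q tau U S ->
  (forall c, sg c = option_map (lvar k) (tau c)) -> Q tau (subst_l k U u) (subst_l k S s).
Proof. induction 1; intros k tau U S HU Hc; simpl.
  - destruct (n <? k); [constructor|]. destruct (n =? k); [auto|constructor].
  - constructor. apply IHQ.
    + eapply QlL; [exact HU|]. intros b; unfold liftS; destruct (tau b); reflexivity.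
    + intros c; unfold liftS; rewrite Hc; destruct (tau c); simpl; auto. f_equal; unfold lvar; ncase.
  - constructor; auto.
  - constructor. apply IHQ.
    + apply QlM with (sg := tau); auto.
    + intros [|c]; simpl; auto.
  - constructor; auto. rewrite Hc in H. destruct (tau b); simpl in H; congruence.
  - rewrite Hc in H. destruct (tau b) as [y0|] eqn:E; simpl in H; inversion H; subst.
    apply Qact with (y := y0) (w' := subst_l k S w'); auto.
    replace (App (subst_l k S w') (Var y0)) with (subst_l k S (App w' (Var (lvar k y0)))).
    + apply (rt_map (subst_l k S) (fun a b h => S3 a b h k S) _ _ H1).
    + change (subst_l k S (App w' (Var (lvar k y0)))) with (App (subst_l k S w') (subst_l k S (Var (lvar k y0)))).
      rewrite <- lL_var, L4. auto.
Qed.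

Lemma QsM : forall rho u s, Q rho u s -> forall c U S, Q rho U S -> rho c = None ->
  Q rho (subst_m c U u) (subst_m c S s).
Proof. induction 1; intros c U S HU Hc; simpl.
  - constructor.
  - constructor. apply IHQ.
    + eapply QlL; [exact HU|]. intros b; unfold liftS; destruct (sg b); reflexivity.
    + unfold liftS; rewrite Hc; auto.
  - constructor; auto.
  - constructor. apply IHQ; auto. eapply QlM; [exact HU|]. intros b; reflexivity.
  - destruct (b =? c); constructor; auto. constructor; auto.
  - destruct (Nat.eqb_spec b c); [subst; congruence|].
    apply Qact with (y := y) (w' := subst_m c S w'); auto.
    apply (rt_map (subst_m c S) (fun a b h => S4 a b h c S) _ _ H1).
Qed.

Lemma QsMf : forall sg u s, Q sg u s -> forall c y sg', sg c = None ->
  (forall d, sg' d = if d =? c then Some y else sg d) -> Q sg' u (subst_m c (Var y) s).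
Proof. induction 1; intros c z sg' Hc Hs; simpl.
  - constructor.
  - constructor. change (lift_l 0 (Var z)) with (Var (S z)). apply IHQ.
    + unfold liftS; rewrite Hc; auto.
    + intros d; unfold liftS; rewrite Hs; destruct (d =? c); auto.
  - constructor; auto.
  - constructor. apply IHQ; auto. intros [|d]; simpl; rewrite ?Hs; auto.
  - destruct (Nat.eqb_spec b c).
    + subst. apply Qact with (y := z) (w' := subst_m c (Var z) s); auto.
      * rewrite Hs, Nat.eqb_refl; auto.
      * apply rt_refl.
    + constructor; auto. rewrite Hs. destruct (Nat.eqb_spec b c); auto; congruence.
  - destruct (Nat.eqb_spec b c); [subst; congruence|].
    apply Qact with (y := y) (w' := subst_m c (Var z) w'); auto.
    + rewrite Hs. destruct (Nat.eqb_spec b c); auto; congruence.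
    + apply (rt_map (subst_m c (Var z)) (fun a b h => S4 a b h c (Var z)) _ _ H1).
Qed.

Lemma Qrefl : forall t sg, (forall b, sg b = None) -> Q sg t t.
Proof. induction t; intros sg H; constructor; auto.
  - apply IHt. intros; unfold liftS; rewrite H; auto.
  - apply IHt. intros [|b]; simpl; auto.
Qed.

Lemma red_lam : forall u u', reduces u u' -> reduces (Lam u) (Lam u').
Proof. apply rt_map. intros; constructor; auto. Qed.
Lemma red_mu : forall u u', reduces u u' -> reduces (Mu u) (Mu u').
Proof. apply rt_map. intros; constructor; auto. Qed.
Lemma red_named : forall b u u', reduces u u' -> reduces (Named b u) (Named b u').
Proof. intros b. apply rt_map. intros; constructor; auto. Qed.
Lemma red_app : forall u u' v v', reduces u u' -> reduces v v' -> reduces (App u v) (App u' v').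
Proof. intros. eapply rt_trans.
  - apply (rt_map (fun x => App x v)); [intros; apply step_appl; auto | eauto].
  - apply (rt_map (fun x => App u' x)); [intros; apply step_appr; auto | eauto].
Qed.

Lemma Sim1 : forall s s', step s s' -> forall sg u, Q sg u s -> exists u', reduces u u' /\ Q sg u' s'.
Proof. induction 1; intros sg w HQ.
  - inversion HQ; subst. match goal with H : Q _ _ (Lam _) |- _ => inversion H; subst end.
    match goal with H : Q _ ?a u |- _ => rename a into b1 end.
    match goal with H : Q _ ?a v |- _ => rename a into b2 end.
    exists (subst_l 0 b2 b1); split; [apply rt_step; constructor|].
    eapply QsL; eauto; intros c; unfold liftS; destruct (sg c); reflexivity.
  - inversion HQ; subst. match goal with H : Q _ _ (Mu _) |- _ => inversion H; subst end.
    match goal with H : Q _ ?a u |- _ => rename a into b1 end.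
    match goal with H : Q _ ?a v |- _ => rename a into b2; rename H into Hv end.
    exists (Mu (subst_m 0 (lift_m 0 b2) b1)); split; [apply rt_step; constructor|].
    constructor. apply QsM; auto. eapply QlM; [exact Hv|]. intros b; reflexivity.
  - inversion HQ; subst. match goal with H : Q _ _ u |- _ => destruct (IHstep _ _ H) as [x [? ?]] end.
    exists (Lam x); split; [apply red_lam; auto | constructor; auto].
  - inversion HQ; subst. match goal with H : Q _ _ u |- _ => destruct (IHstep _ _ H) as [x [? ?]] end.
    eexists (App x _); split; [apply red_app; eauto; apply rt_refl | constructor; eauto].
  - inversion HQ; subst. match goal with H : Q _ _ v |- _ => destruct (IHstep _ _ H) as [x [? ?]] end.
    eexists (App _ x); split; [apply red_app; eauto; apply rt_refl | constructor; eauto].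
  - inversion HQ; subst. match goal with H : Q _ _ u |- _ => destruct (IHstep _ _ H) as [x [? ?]] end.
    exists (Mu x); split; [apply red_mu; auto | constructor; auto].
  - inversion HQ; subst.
    + match goal with H : Q _ _ u |- _ => destruct (IHstep _ _ H) as [x [? ?]] end.
      exists (Named a x); split; [apply red_named; auto | constructor; auto].
    + eexists (Named a _); split; [apply rt_refl|]. eapply Qact; eauto.
      eapply rt_trans; [eauto | apply rt_step; auto].
Qed.

Lemma SimN : forall s n, reduces s n -> forall sg u, Q sg u s -> exists u', reduces u u' /\ Q sg u' n.
Proof. intros s n H. induction H; intros sg u HQ.
  - eapply Sim1; eauto.
  - exists u; split; auto. apply rt_refl.
  - destruct (IHclos_refl_trans1 _ _ HQ) as [u1 [? ?]].
    destruct (IHclos_refl_trans2 _ _ H2) as [u2 [? ?]].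
    exists u2; split; auto. eapply rt_trans; eauto.
Qed.

Fixpoint size (t : term) : nat :=
  match t with Var _ => 1 | Lam u => S (size u) | App u v => S (size u + size v)
  | Mu u => S (size u) | Named _ u => S (size u) end.
Definition hd (t : term) : nat :=
  match t with Var _ => 0 | Lam _ => 1 | App _ _ => 2 | Mu _ => 3 | Named _ _ => 4 end.

Lemma Q_hd : forall sg u s, Q sg u s -> hd u = hd s.
Proof. induction 1; reflexivity. Qed.

Lemma D : forall w y X, reduces (App w (Var y)) X ->
  (exists w'', reduces w w'' /\ X = App w'' (Var y)) \/
  (exists p, reduces w (Lam p) /\ reduces (subst_l 0 (Var y) p) X) \/
  (exists p, reduces w (Mu p) /\ reduces (Mu (subst_m 0 (Var y) p)) X).
Proof. intros w y X H. apply clos_rt_rt1n in H. remember (App w (Var y)) as A eqn:E.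
  revert w E. induction H; intros w E; subst.
  - left. exists w; split; auto. apply rt_refl.
  - apply clos_rt1n_rt in H0. inversion H; subst.
    + right; left. exists u; split; [apply rt_refl | auto].
    + right; right. exists u; split; [apply rt_refl | auto].
    + destruct (IHclos_refl_trans_1n u' eq_refl) as [[w'' [? ?]] | [[p [? ?]] | [p [? ?]]]].
      * left. exists w''; split; auto. eapply rt_trans; [apply rt_step; eauto | auto].
      * right; left. exists p; split; auto. eapply rt_trans; [apply rt_step; eauto | auto].
      * right; right. exists p; split; auto. eapply rt_trans; [apply rt_step; eauto | auto].
    + inversion H4.
Qed.

Lemma Dmu : forall X r, reduces (Mu X) r -> exists r', r = Mu r' /\ reduces X r'.
Proof. intros X r H. apply clos_rt_rt1n in H. remember (Mu X) as A eqn:E.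
  revert X E. induction H; intros X0 E; subst.
  - exists X0; split; auto. apply rt_refl.
  - inversion H; subst. destruct (IHclos_refl_trans_1n u' eq_refl) as [r' [? ?]].
    exists r'; split; auto. eapply rt_trans; [apply rt_step; eauto | auto].
Qed.

Lemma nf_lam : forall m, normal m -> normal (Lam m).
Proof. intros m H t' Hs; inversion Hs; subst; eapply H; eauto. Qed.
Lemma nf_mu : forall m, normal m -> normal (Mu m).
Proof. intros m H t' Hs; inversion Hs; subst; eapply H; eauto. Qed.
Lemma nf_named : forall b m, normal m -> normal (Named b m).
Proof. intros b m H t' Hs; inversion Hs; subst; eapply H; eauto. Qed.
Lemma nf_app : forall m1 m2, normal m1 -> normal m2 -> hd m1 <> 1 -> hd m1 <> 3 -> normal (App m1 m2).
Proof. intros m1 m2 H1 H2 N1 N3 t' Hs; inversion Hs; subst; simpl in *; try congruence;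
  [eapply H1 | eapply H2]; eauto. Qed.
Lemma nf_inv_lam : forall m, normal (Lam m) -> normal m.
Proof. intros m H t' Hs. apply (H (Lam t')); constructor; auto. Qed.
Lemma nf_inv_mu : forall m, normal (Mu m) -> normal m.
Proof. intros m H t' Hs. apply (H (Mu t')); constructor; auto. Qed.
Lemma nf_inv_named : forall b m, normal (Named b m) -> normal m.
Proof. intros b m H t' Hs. apply (H (Named b t')); constructor; auto. Qed.
Lemma nf_inv_appl : forall m1 m2, normal (App m1 m2) -> normal m1.
Proof. intros m1 m2 H t' Hs. apply (H (App t' m2)); constructor; auto. Qed.
Lemma nf_inv_appr : forall m1 m2, normal (App m1 m2) -> normal m2.
Proof. intros m1 m2 H t' Hs. apply (H (App m1 t')); constructor; auto. Qed.

Definition P (N : nat) := forall sg u s n, Q sg u s -> reduces s n -> normal n -> size n <= N ->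
  exists m, reduces u m /\ normal m /\ hd m = hd n.

Lemma NL : forall N, P N -> forall sg w w' y r, size r <= N -> Q sg w w' ->
  reduces (App w' (Var y)) r -> normal r -> normalizable w.
Proof. intros N HP sg w w' y r Hsz HQ Hr Hn.
  destruct (D _ _ _ Hr) as [[w'' [H1 ->]] | [[p [H1 H2]] | [p [H1 H2]]]].
  - destruct (HP sg w w' w'' HQ H1 (nf_inv_appl _ _ Hn)) as [m [? [? ?]]].
    + simpl in Hsz; lia.
    + exists m; auto.
  - destruct (SimN _ _ H1 _ _ HQ) as [w1 [Hw1 HQ1]]. inversion HQ1; subst.
    assert (HQ2 : Q sg (subst_l 0 (Var y) u) (subst_l 0 (Var y) p)).
    { eapply QsL; eauto. constructor. }
    destruct (HP _ _ _ _ HQ2 H2 Hn Hsz) as [m [? [? ?]]].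
    destruct (Cren _ _ _ _ H H0) as [m1 [? ?]].
    exists (Lam m1); split; [eapply rt_trans; [eauto | apply red_lam; auto] | apply nf_lam; auto].
  - destruct (SimN _ _ H1 _ _ HQ) as [w1 [Hw1 HQ1]]. inversion HQ1; subst.
    destruct (Dmu _ _ H2) as [r' [-> Hr']].
    assert (HQ2 : Q (fun d => if d =? 0 then Some y else shiftS sg d) u (subst_m 0 (Var y) p)).
    { eapply QsMf; eauto. }
    destruct (HP _ _ _ _ HQ2 Hr' (nf_inv_mu _ Hn)) as [m [? [? ?]]]; [simpl in Hsz; lia|].
    exists (Mu m); split; [eapply rt_trans; [eauto | apply red_mu; auto] | apply nf_mu; auto].
Qed.

Lemma Inner : forall N, (forall N', N' < N -> P N') -> forall sg u n, Q sg u n -> normal n -> size n <= N ->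
  exists m, reduces u m /\ normal m /\ hd m = hd n.
Proof. intros N IH. induction 1; intros Hn Hs; simpl in Hs.
  - exists (Var n); split; [apply rt_refl | split; auto].
  - destruct IHQ as [m [? [? ?]]]; [eapply nf_inv_lam; eauto | lia|].
    exists (Lam m); split; [apply red_lam; auto | split; [apply nf_lam; auto | auto]].
  - destruct IHQ1 as [m1 [? [? E1]]]; [eapply nf_inv_appl; eauto | lia|].
    destruct IHQ2 as [m2 [? [? ?]]]; [eapply nf_inv_appr; eauto | lia|].
    exists (App m1 m2); split; [apply red_app; auto | split; auto].
    apply nf_app; auto; rewrite E1.
    + destruct s1; simpl; try discriminate. exfalso; eapply Hn; constructor.
    + destruct s1; simpl; try discriminate. exfalso; eapply Hn; constructor.
  - destruct IHQ as [m [? [? ?]]]; [eapply nf_inv_mu; eauto | lia|].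
    exists (Mu m); split; [apply red_mu; auto | split; [apply nf_mu; auto | auto]].
  - destruct IHQ as [m [? [? ?]]]; [eapply nf_inv_named; eauto | lia|].
    exists (Named b m); split; [apply red_named; auto | split; [apply nf_named; auto | auto]].
  - destruct (NL (size r) (IH (size r) ltac:(lia)) sg w w' y r (le_n _) H0 H1 (nf_inv_named _ _ Hn)) as [m [? ?]].
    exists (Named b m); split; [apply red_named; auto | split; [apply nf_named; auto | auto]].
Qed.

Lemma P_all : forall N, P N.
Proof. intros N. induction N as [N IH] using (well_founded_induction lt_wf).
  intros sg u s n HQ Hr Hn Hs. destruct (SimN _ _ Hr _ _ HQ) as [u' [Hu' HQ']].
  destruct (Inner N IH _ _ _ HQ' Hn Hs) as [m [? [? ?]]].
  exists m; split; [eapply rt_trans; eauto | auto].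
Qed.

Theorem mainTheorem13 (t : term) (y : nat) :
  normalizable (App t (Var y)) -> normalizable t.
Proof.
  intros [n [Hr Hn]].
  apply (NL (size n) (P_all _) (fun _ => None) t t y n (le_n _)); auto.
  apply Qrefl; auto.
Qed.
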